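(* Let $t\ge 3$ be an integer, let $G$ be a graph not containing $K_{3,t}$ as a subgraph, let $D$ be a minimum dominating set of $G$ with $\gamma=|D|$, and let $\nabla$ be an integer with $\nabla>\nabla_1^B(G)$. Define $D_1=\{v\in V(G):$ for all $A\subseteq V(G)\setminus\{v\}$ with $N(v)\subseteq N[A]$ we have $|A|>2\nabla-1\}$, $R_1=V(G)\setminus N[D_1]$, $N_{R_1}(v)=N(v)\cap R_1$, $B_v=\{z\in V(G)\setminus\{v\}: |N_{R_1}(v)\cap N_{R_1}(z)|\ge(2\nabla-1)t+1\}$ for $v\in V(G)$, $W=\{v\in V(G): B_v\neq\emptyset\}$, and $D_2=\bigcup_{v\in W}(\{v\}\cup B_v)$. Let $\eta\in[0,1]$ be such that $|(D_1\cup D_2)\cap D|=\eta\gamma$. Then $|D_1\cup D_2|<\rho(G)\gamma+2\nabla\eta\gamma$.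
   Context: Graphs are finite, undirected and simple. $N(v)$ is the open neighbourhood of $v$, $N[v]=N(v)\cup\{v\}$, $N[A]=\bigcup_{a\in A}N[a]$. A dominating set is a set $D$ with $N[D]=V(G)$. A $1$-shallow minor of $G$ is a graph obtained from $G$ by deleting vertices and edges and contracting pairwise vertex-disjoint connected subgraphs of radius at most $1$; $\nabla_1^B(G)$ is the maximum edge density $|E(H)|/|V(H)|$ of a bipartite $1$-shallow minor $H$ of $G$. The Hall ratio $\rho(G)$ is $\max\{|V(H)|/\alpha(H): H\subseteq G\}$ with $\alpha(H)$ the independence number. $K_{3,t}$ is the complete bipartite graph with parts of sizes $3$ and $t$. *)

(* Defs.v *)
From mathcomp Require Import all_boot all_order all_algebra.
Set Implicit Arguments. Unset Strict Implicit. Unset Printing Implicit Defensive.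
Import Order.TTheory GRing.Theory Num.Theory.

Section Graph.
Variables (T : finType) (e : rel T).

Definition simple_graph : Prop := symmetric e /\ irreflexive e.

Definition nbhd (v : T) : {set T} := [set u | e v u].
Definition cnbhd (v : T) : {set T} := v |: nbhd v.
Definition cnbhdS (A : {set T}) : {set T} := \bigcup_(a in A) cnbhd a.

Definition dominating (D : {set T}) : bool := cnbhdS D == setT.
Definition min_dominating (D : {set T}) : Prop :=
  dominating D /\ forall D' : {set T}, dominating D' -> #|D| <= #|D'|.

Definition has_K3t (t : nat) : Prop :=
  exists A B : {set T}, [/\ #|A| = 3, #|B| = t, [disjoint A & B] &
    forall a b, a \in A -> b \in B -> e a b].

(* subgraphs H of G: a vertex set S and an edge set F (pairs) of edges of G inside S *)
Definition is_subgraph (S : {set T}) (F : {set T * T}) : bool :=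
  [forall p in F, [&& e p.1 p.2, p.1 \in S & p.2 \in S]].
Definition indep_in (F : {set T * T}) (I : {set T}) : bool :=
  [forall x in I, forall y in I, (x, y) \notin F].
Definition alpha_sub (S : {set T}) (F : {set T * T}) : nat :=
  \max_(I : {set T} | (I \subset S) && indep_in F I) #|I|.
Definition hall_ratio : rat :=
  \big[Num.max/0%R]_(p : {set T} * {set (T * T)} |
        is_subgraph p.1 p.2 && (p.1 != set0))
     ((#|p.1|%:R : rat) / (alpha_sub p.1 p.2)%:R)%R.

(* "nab > nabla_1^B(G)": every bipartite 1-shallow minor H of G (with at least one
   vertex) has edge density |E(H)|/|V(H)| < nab.  A 1-shallow minor with vertex set
   'I_k is given by pairwise disjoint branch sets X i, each inducing a connected
   subgraph of radius <= 1 (centre c i, X i within N[c i]); an edge ij of H requires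
   an edge of G between X i and X j.  Bipartiteness: sides given by s; edges of H are
   stored as pairs (i, j) oriented from side false to side true. *)
Definition nabla1B_lt (nab : rat) : Prop :=
  forall (k : nat) (X : 'I_k -> {set T}) (c : 'I_k -> T) (s : 'I_k -> bool)
         (E : {set 'I_k * 'I_k}),
    0 < k ->
    (forall i, c i \in X i) ->
    (forall i, X i \subset cnbhd (c i)) ->
    (forall i j, i != j -> [disjoint X i & X j]) ->
    (forall p, p \in E -> [&& ~~ s p.1, s p.2 &
                              [exists x in X p.1, exists y in X p.2, e x y]]) ->
    ((#|E|%:R : rat) / k%:R < nab)%R.

Section Sets.
Variables (nab : int) (t : nat).

Definition D1 : {set T} :=
  [set v | [forall A : {set T}, ((v \notin A) && (nbhd v \subset cnbhdS A)) ==>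
                                 ((#|A|%:Z) > 2 * nab - 1)%R]].
Definition R1 : {set T} := ~: cnbhdS D1.
Definition nbhdR1 (v : T) : {set T} := nbhd v :&: R1.
Definition Bv (v : T) : {set T} :=
  [set z | (z != v) &&
     ((2 * nab - 1) * t%:Z + 1 <= #|nbhdR1 v :&: nbhdR1 z|%:Z)%R].
Definition W : {set T} := [set v | Bv v != set0].
Definition D2 : {set T} := \bigcup_(v in W) (v |: Bv v).
End Sets.
End Graph.

(* Main.v *)
Require Import Defs.
From mathcomp Require Import all_boot all_order all_algebra.
From mathcomp Require Import zify ring lra.
Set Implicit Arguments. Unset Strict Implicit. Unset Printing Implicit Defensive.
Import Order.TTheory GRing.Theory Num.Theory.

Lemma nabla_fin (T : finType) (e : rel T) (nab : rat) (U : finType)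
  (X : U -> {set T}) (c : U -> T) (s : U -> bool) (E : {set U * U}) :
  nabla1B_lt e nab -> (0 < #|U|)%N ->
  (forall i, c i \in X i) ->
  (forall i, X i \subset cnbhd e (c i)) ->
  (forall i j, i != j -> [disjoint X i & X j]) ->
  (forall p, p \in E -> [&& ~~ s p.1, s p.2 &
                [exists x in X p.1, exists y in X p.2, e x y]]) ->
  ((#|E|%:R : rat) / #|U|%:R < nab)%R.
Proof.
move=> H U0 Hc HX Hd HE.
pose f := fun p : U * U => (enum_rank p.1, enum_rank p.2).
have finj : injective f.
  by move=> [a b] [a' b'] [/enum_rank_inj -> /enum_rank_inj ->].
have := H #|U| (fun i => X (enum_val i)) (fun i => c (enum_val i)) (fun i => s (enum_val i)) (f @: E) U0.
rewrite card_imset //; apply => //=.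
- move=> i j ij; apply: Hd; apply: contra ij => /eqP/enum_val_inj ->; done.
- move=> p /imsetP [[a b] Hab ->] /=; rewrite !enum_rankK; exact: (HE _ Hab).
Qed.


Lemma pigeon (T U : finType) (C : {set T}) (A : {set U}) (f : T -> U) (t : nat) :
  {in C, forall c, f c \in A} -> t * #|A| < #|C| ->
  exists2 a, a \in A & t < #|[set c in C | f c == a]|.
Proof.
move=> fC lt.
apply/exists_inP; apply: contraLR lt; rewrite negb_exists_in => /forall_inP H.
rewrite -leqNgt -sum1_card (partition_big f (mem A)) //=.
rewrite mulnC -sum_nat_const; apply: leq_sum => a aA.
rewrite sum1dep_card; by rewrite leqNgt H.
Qed.

Lemma sub_card_eq (T : finType) (S : {set T}) (t : nat) :
  t <= #|S| -> exists2 B : {set T}, B \subset S & #|B| = t.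
Proof.
move=> le; exists [set x | x \in take t (enum S)].
  apply/subsetP => x; rewrite inE => /mem_take; by rewrite mem_enum.
rewrite cardsE (card_uniqP _); last by apply: take_uniq; exact: enum_uniq.
by rewrite size_takel // -cardE.
Qed.

Lemma K3 (T : finType) (e : rel T) (t : nat) (p q a : T) (S : {set T}) :
  irreflexive e -> p != q -> a != p -> a != q ->
  S \subset nbhd e p :&: nbhd e q -> S \subset cnbhd e a -> t < #|S| ->
  has_K3t e t.
Proof.
move=> irr pq ap aq Spq Sa lt.
have [B BS cB] : exists2 B : {set T}, B \subset S :\ a & #|B| = t.
  apply: sub_card_eq; move: lt; rewrite (cardsD1 a S); case: (a \in S) => /=; lia.
have HB b : b \in B -> [/\ e p b, e q b, e a b & b \in S].
  move=> /(subsetP BS); rewrite !inE => /andP [ba bS].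
  have := subsetP Spq b bS; rewrite !inE => /andP [-> ->].
  by have := subsetP Sa b bS; rewrite !inE (negPf ba) /=.
exists [set p; q; a], B; split => //.
- rewrite -setUA !cardsU1 cards1 !inE; move: pq ap aq.
  by rewrite (eq_sym p a) (eq_sym q a) => /negPf -> /negPf -> /negPf ->.
- rewrite disjoint_subset; apply/subsetP => b bA; rewrite inE; apply/negP => bB.
  have [epb eqb eab _] := HB b bB.
  move: bA; rewrite !inE => /orP [/orP [] | ] /eqP ?; subst b; by rewrite irr in epb eqb eab.
- move=> x b; rewrite !inE => /orP [/orP [] | ] /eqP -> /HB [] //.
Qed.


Definition own (T : finType) (e : rel T) (D : {set T}) (y : T) : T :=
  if y \in D then y else odflt y [pick d in D | y \in cnbhd e d].

Lemma ownP (T : finType) (e : rel T) (D : {set T}) (y : T) :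
  y \in cnbhdS e D -> own e D y \in D /\ y \in cnbhd e (own e D y).
Proof.
rewrite /own; case: ifP => yD.
  by rewrite /cnbhd !inE eqxx.
move=> /bigcupP [d dD yd].
case: pickP => [d' /andP [] //|/(_ d)]; by rewrite dD yd.
Qed.

Lemma own_id (T : finType) (e : rel T) (D : {set T}) (y : T) :
  y \in D -> own e D y = y.
Proof. by rewrite /own => ->. Qed.

Definition thr (m t : nat) : nat := ((2 * m - 1) * t)%N.

Definition partner (T : finType) (e : rel T) (m t : nat) (x y : T) : bool :=
  (y != x) && (thr m t < #|nbhdR1 e (Posz m) x :&: nbhdR1 e (Posz m) y|)%N.

Lemma BvE (T : finType) (e : rel T) (m t : nat) (x y : T) : (0 < m)%N ->
  (y \in Bv e (Posz m) t x) = partner e m t x y.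
Proof.
move=> m0; rewrite /Bv /partner inE /thr; congr andb.
set n := #|_|.
apply/idP/idP; lia.
Qed.

Lemma partner_sym (T : finType) (e : rel T) (m t : nat) (x y : T) :
  partner e m t x y = partner e m t y x.
Proof. by rewrite /partner eq_sym setIC. Qed.

Lemma D2P (T : finType) (e : rel T) (m t : nat) (x : T) : (0 < m)%N ->
  reflect (exists y, partner e m t x y) (x \in D2 e (Posz m) t).
Proof.
move=> m0; apply: (iffP bigcupP).
  move=> [v]; rewrite /W inE => /set0Pn [y yB].
  have pvy : partner e m t v y by rewrite -(BvE e t v y m0).
  move=> /setU1P [->|]; first by exists y.
  by rewrite (BvE e t v x m0) partner_sym => ?; exists v.
move=> [y pxy]; exists y.
  by rewrite /W inE; apply/set0Pn; exists x; rewrite (BvE e t y x m0) partner_sym.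
by apply/setU1P; right; rewrite (BvE e t y x m0) partner_sym pxy.
Qed.

Lemma partner_D2 (T : finType) (e : rel T) (m t : nat) (x y : T) : (0 < m)%N ->
  partner e m t x y -> y \in D2 e (Posz m) t.
Proof. by move=> m0 p; apply/D2P => //; exists x; rewrite partner_sym. Qed.

Lemma D1P (T : finType) (e : rel T) (m : nat) (v : T) :
  reflect (forall A : {set T}, v \notin A -> nbhd e v \subset cnbhdS e A -> (2 * m <= #|A|)%N)
          (v \in D1 e (Posz m)).
Proof.
rewrite inE; apply: (iffP forallP) => H A.
  move=> vA sub; have := H A; rewrite vA sub /=; lia.
apply/implyP => /andP [vA sub]; have := H A vA sub; lia.
Qed.


Lemma in_cnbhdS (T : finType) (e : rel T) (A : {set T}) (a c : T) :
  a \in A -> c \in cnbhd e a -> c \in cnbhdS e A.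
Proof. by move=> aA ca; apply/bigcupP; exists a. Qed.

Lemma nbhd_cnbhd (T : finType) (e : rel T) (a c : T) :
  c \in nbhd e a -> c \in cnbhd e a.
Proof. by move=> h; rewrite /cnbhd in_setU1 h orbT. Qed.

Lemma C_sub (T : finType) (e : rel T) (m : nat) (p q : T) :
  nbhdR1 e (Posz m) p :&: nbhdR1 e (Posz m) q \subset nbhd e p :&: nbhd e q.
Proof.
apply/subsetP => c; rewrite /nbhdR1 !in_setI => /andP [/andP [-> _] /andP [-> _]] //.
Qed.

Lemma partners_small (T : finType) (e : rel T) (m t : nat) (y : T) :
  irreflexive e -> ~ has_K3t e t -> (0 < m)%N ->
  (#|[set x | partner e m t y x]| <= 2 * m - 1)%N.
Proof.
move=> irr noK m0.
have [->|[x0]] := set_0Vmem [set x | partner e m t y x]; first by rewrite cards0.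
rewrite inE => px0.
have [c cC] : exists c, c \in nbhdR1 e (Posz m) y :&: nbhdR1 e (Posz m) x0.
  apply/set0Pn; rewrite -card_gt0; move: px0; rewrite /partner => /andP [_]; lia.
move: cC; rewrite /nbhdR1 !in_setI => /andP [/andP [cy cR] _].
have yD1 : y \notin D1 e (Posz m).
  apply/negP => yD; move: cR; rewrite /R1 in_setC => /negP; apply.
  by apply: (in_cnbhdS yD); apply: nbhd_cnbhd.
move: yD1; rewrite inE negb_forall => /existsP [A].
rewrite negb_imply => /andP [/andP [yA sub] small].
have cA : (#|A| <= 2 * m - 1)%N by move: small; lia.
apply: (leq_trans _ cA); apply: subset_leq_card; apply/subsetP => x.
rewrite inE => pyx.
set C := nbhdR1 e (Posz m) y :&: nbhdR1 e (Posz m) x.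
have CN : C \subset nbhd e y :&: nbhd e x by apply: C_sub.
have fC : {in C, forall c, own e A c \in A}.
  move=> c' c'C; have := subsetP CN c' c'C; rewrite in_setI => /andP [c'y _].
  by case: (ownP (subsetP sub c' c'y)).
have [a aA Sa] : exists2 a, a \in A & (t < #|[set c in C | own e A c == a]|)%N.
  apply: (pigeon (t:=t) fC); move: pyx; rewrite /partner /thr -/C => /andP [_ h].
  apply: leq_ltn_trans h; rewrite mulnC leq_mul2r; by rewrite cA orbT.
case: (eqVneq x a) => [->//|xa].
exfalso; apply: noK.
move: pyx; rewrite /partner => /andP [xy _].
apply: (K3 (p := y) (q := x) (a := a) irr _ _ _ _ _ Sa).
- by rewrite eq_sym.
- by apply: contraNneq yA => <-.
- by rewrite eq_sym.
- by apply: subset_trans CN; apply/subsetP => c'; rewrite inE => /andP [].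
- apply/subsetP => c'; rewrite inE => /andP [c'C /eqP <-].
  have := subsetP CN c' c'C; rewrite in_setI => /andP [c'y _].
  by case: (ownP (subsetP sub c' c'y)).
Qed.


Definition Xd (T : finType) (e : rel T) (D I : {set T}) (d : T) : {set T} :=
  [set y | (y \notin I) && (own e D y == d)].

Definition Adj (T : finType) (e : rel T) (D I : {set T}) (i : T) : {set T} :=
  [set d in D | [exists y in Xd e D I d, e i y]].

Lemma dom_own (T : finType) (e : rel T) (D : {set T}) (y : T) :
  dominating e D -> own e D y \in D /\ y \in cnbhd e (own e D y).
Proof. by move=> /eqP H; apply: ownP; rewrite H inE. Qed.

Lemma heavy (T : finType) (e : rel T) (m t : nat) (D I : {set T}) (i : T) :
  simple_graph e -> ~ has_K3t e t -> (0 < m)%N -> dominating e D ->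
  [disjoint I & D] -> {in I &, forall x y, ~~ e x y} -> i \in I ->
  (i \in D1 e (Posz m) \/ exists2 z, z \notin D & partner e m t i z) ->
  (2 * m <= #|Adj e D I i|)%N.
Proof.
move=> [sym irr] noK m0 dom dis ind iI H.
have iD : i \notin D by rewrite (disjointFr dis iI).
have key y : e i y -> own e D y \in Adj e D I i.
  move=> iy; have [oD _] := dom_own y dom.
  rewrite inE oD /=; apply/existsP; exists y; rewrite iy andbT inE eqxx andbT.
  by apply: contraTN iy => yI; apply: ind.
have AD : Adj e D I i \subset D by apply/subsetP => d; rewrite inE => /andP [].
case: H => [iD1|[z zD piz]].
  apply: (D1P _ _ _ iD1).
    by apply: contra iD; apply: (subsetP AD).
  apply/subsetP => y; rewrite inE => iy.
  apply: (in_cnbhdS (key y iy)); exact: (dom_own y dom).2.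
rewrite leqNgt; apply/negP => small.
set C := nbhdR1 e (Posz m) i :&: nbhdR1 e (Posz m) z.
have CN : C \subset nbhd e i :&: nbhd e z by apply: C_sub.
have fC : {in C, forall c, own e D c \in Adj e D I i}.
  move=> c cC; have := subsetP CN c cC; rewrite !in_setI => /andP [ic _].
  by apply: key; move: ic; rewrite /nbhd inE.
have [a aA Sa] : exists2 a, a \in Adj e D I i & (t < #|[set c in C | own e D c == a]|)%N.
  apply: (pigeon (t:=t) fC); move: piz; rewrite /partner /thr -/C => /andP [_ h].
  apply: leq_ltn_trans h; rewrite mulnC leq_mul2r.
  apply/orP; right; move: small; lia.
apply: noK.
move: piz; rewrite /partner => /andP [zi _].
have aD := subsetP AD a aA.
apply: (K3 (p := i) (q := z) (a := a) irr _ _ _ _ _ Sa).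
- by rewrite eq_sym.
- by apply: contraNneq iD => <-.
- by apply: contraNneq zD => <-.
- by apply: subset_trans CN; apply/subsetP => c'; rewrite inE => /andP [].
- apply/subsetP => c'; rewrite inE => /andP [c'C /eqP <-].
  exact: (dom_own c' dom).2.
Qed.


Lemma card_valset (T : finType) (P B : {set T}) : B \subset P ->
  #|[set w : {x : T | x \in P} | val w \in B]| = #|B|.
Proof.
move=> BP; rewrite -(card_imset _ val_inj); apply: eq_card => x.
apply/imsetP/idP => [[w]|xB]; first by rewrite inE => ? ->.
by exists (exist _ x (subsetP BP x xB)); rewrite // inE.
Qed.

Lemma indep_small (T : finType) (e : rel T) (m t : nat) (D I : {set T}) :
  simple_graph e -> ~ has_K3t e t -> (0 < m)%N -> dominating e D -> (0 < #|D|)%N ->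
  nabla1B_lt e (m%:R : rat) ->
  [disjoint I & D] ->
  {in I &, forall x y, ~~ e x y} ->
  {in I, forall x, x \in D1 e (Posz m) \/ exists2 z, z \notin D & partner e m t x z} ->
  (#|I| < #|D|)%N.
Proof.
move=> sg noK m0 dom D0 Hnab dis ind Hh.
pose P := I :|: D.
pose U : finType := {x : T | x \in P}.
pose Xb (u : U) := if val u \in D then Xd e D I (val u) else [set val u].
pose E := [set p : U * U | [&& val p.1 \notin D, val p.2 \in D &
            [exists y in Xd e D I (val p.2), e (val p.1) y]]].
have cU : #|U| = (#|I| + #|D|)%N.
  rewrite card_sig; rewrite -[#|[pred x | _]|]/#|P|.
  by rewrite cardsU (disjoint_setI0 dis) cards0 subn0.
have HE := @nabla_fin T e (m%:R) U Xb (fun u => val u) (fun u => val u \in D) E Hnab.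
have {HE} HE : (#|E| < m * #|U|)%N.
  have U0 : (0 < #|U|)%N by rewrite cU; lia.
  suff : ((#|E|%:R : rat) / #|U|%:R < m%:R)%R.
    by rewrite ltr_pdivrMr ?ltr0n // -natrM ltr_nat.
  apply: HE => //.
  - move=> u; rewrite /Xb; case: ifP => uD; last by rewrite set11.
    by rewrite inE own_id // eqxx andbT (disjointFl dis uD).
  - move=> u; rewrite /Xb; case: ifP => uD.
      apply/subsetP => y; rewrite inE => /andP [_ /eqP <-]; exact: (dom_own y dom).2.
    by rewrite sub1set /cnbhd in_setU1 eqxx.
  - move=> u v uv; rewrite disjoint_subset; apply/subsetP => y yu; rewrite inE.
    apply/negP => yv; move: yu yv; rewrite /Xb.
    have uP := valP u; have vP := valP v.
    case: ifP => uD; case: ifP => vD; rewrite !inE.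
    + move=> /andP [_ /eqP ->] /andP [_ /eqP] /val_inj uv'; by rewrite uv' eqxx in uv.
      move=> /andP [yI _] /eqP yv; subst y; move: vP; by rewrite !inE (negPf yI) vD.
    + move=> /eqP yu /andP [yI _]; subst y; move: uP; by rewrite !inE (negPf yI) uD.
    + by move=> /eqP -> /eqP /val_inj uv'; rewrite uv' eqxx in uv.
  - move=> p; rewrite inE => /and3P [p1 p2 ex]; rewrite p1 p2 /=.
    rewrite /Xb (negPf p1) p2; apply/existsP; exists (val p.1); rewrite set11 /=.
    exact: ex.
have low : (2 * m * #|I| <= #|E|)%N.
  rewrite -[#|E|]sum1_card (partition_big (fun p : U * U => p.1) predT) //=.
  rewrite (bigID (fun u : U => val u \in I)) /=; apply: leq_trans (leq_addr _ _).
  have -> : #|I| = #|[set u : U | val u \in I]| by rewrite card_valset // subsetUl.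
  rewrite mulnC -sum_nat_cond_const; apply: leq_sum => u uI.
  rewrite sum1dep_card.
  have AP : Adj e D I (val u) \subset P.
    apply: subset_trans (subsetUr I D); apply/subsetP => d; rewrite inE => /andP [] //.
  have hv := @heavy T e m t D I (val u) sg noK m0 dom dis ind uI (Hh _ uI).
  apply: (leq_trans hv).
  have pinj : injective (pair u : U -> U * U) by move=> a b [].
  rewrite -(card_valset AP) -(card_imset _ pinj).
  apply: subset_leq_card; apply/subsetP => p /imsetP [w]; rewrite inE => wA ->.
  rewrite inE /= eqxx andbT inE /=.
  move: wA; rewrite inE => /andP [-> ->]; by rewrite (disjointFr dis uI).
move: low HE; rewrite cU; nia.
Qed.


Lemma bigmax_ge (I : finType) (P : pred I) (f : I -> rat) (p : I) :
  P p -> (f p <= \big[Num.max/0%R]_(q | P q) f q)%R.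
Proof.
move=> Pp; have : p \in index_enum I by rewrite mem_index_enum.
elim: (index_enum I) => // a r IH; rewrite inE big_cons => /orP [/eqP <-|pr].
  by rewrite Pp le_max lexx.
case: (P a); last exact: IH.
by rewrite le_max (IH pr) orbT.
Qed.

Lemma alpha_pos (T : finType) (e : rel T) (S : {set T}) (F : {set T * T}) (x : T) :
  irreflexive e -> is_subgraph e S F -> x \in S -> (0 < alpha_sub S F)%N.
Proof.
move=> irr sub xS; apply: (@leq_trans #|[set x]|); first by rewrite cards1.
apply: (@leq_bigmax_cond _ (fun I : {set T} => (I \subset S) && indep_in F I)
          (fun I => #|I|) [set x]).
rewrite sub1set xS /=; apply/forall_inP => a; rewrite inE => /eqP ->.
apply/forall_inP => b; rewrite inE => /eqP ->.
apply/negP => xx; move: sub => /forall_inP /(_ _ xx) /=; by rewrite irr.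
Qed.

Lemma hall_ge (T : finType) (e : rel T) (S : {set T}) (F : {set T * T}) :
  is_subgraph e S F -> S != set0 ->
  ((#|S|%:R : rat) / (alpha_sub S F)%:R <= hall_ratio e)%R.
Proof.
move=> sub S0; rewrite /hall_ratio.
apply: (@bigmax_ge _ (fun p : {set T} * {set (T * T)} => is_subgraph e p.1 p.2 && (p.1 != set0))
     (fun p => ((#|p.1|%:R : rat) / (alpha_sub p.1 p.2)%:R)%R) (S, F)).
by rewrite /= sub S0.
Qed.

Unset Implicit Arguments.
Local Open Scope ring_scope.

Theorem lemma34 (T : finType) (e : rel T) (t : nat) (D : {set T}) (nab : int)
  (eta : rat) :
  simple_graph e -> (0 < #|T|)%N -> (3 <= t)%N ->
  ~ has_K3t e t ->
  min_dominating e D ->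
  nabla1B_lt e (nab%:~R) ->
  0 <= eta <= 1 ->
  (#|(D1 e nab :|: D2 e nab t) :&: D|%:R : rat) = eta * #|D|%:R ->
  (#|D1 e nab :|: D2 e nab t|%:R : rat) <
    hall_ratio e * #|D|%:R + 2 * nab%:~R * eta * #|D|%:R.
Proof.
move=> sg T0 t3 noK [dom _] Hnab _ Heta.
have [x0 _] : exists x0 : T, true.
  by move: T0 => /card_gt0P [x _]; exists x.
have nab0 : 0 < nab.
  have := Hnab 1%N (fun _ => [set x0]) (fun _ => x0) (fun _ => false) set0 isT.
  rewrite cards0 mul0r ltr0z; apply => //.
  - by move=> i; rewrite set11.
  - by move=> i; rewrite sub1set /cnbhd in_setU1 eqxx.
  - by move=> i j; rewrite (ord1 i) (ord1 j) eqxx.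
  - by move=> p; rewrite inE.
case: nab nab0 Hnab Heta => // m m0 Hnab Heta.
have {}m0 : (0 < m)%N by [].
have {}Hnab : nabla1B_lt e (m%:R : rat) by [].
have D0 : (0 < #|D|)%N.
  move: dom => /eqP dom; have : x0 \in cnbhdS e D by rewrite dom inE.
  by move=> /bigcupP [d dD _]; rewrite card_gt0; apply/set0Pn; exists d.
set X := D1 e (Posz m) :|: D2 e (Posz m) t.
set PD := X :&: D.
have [sym irr] := sg.
set Bad := [set x in X :\: D | [exists y in D, partner e m t x y]].
set X' := (X :\: D) :\: Bad.
have cU (A B : {set T}) : (#|A :|: B| <= #|A| + #|B|)%N by rewrite cardsU leq_subr.
have cardX : (#|X| <= #|X'| + #|Bad| + #|PD|)%N.
  have sub : X \subset X' :|: Bad :|: PD.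
    apply/subsetP => x xX; rewrite !in_setU.
    case xD: (x \in D); first by rewrite /PD in_setI xX xD !orbT.
    case xB: (x \in Bad); first by rewrite orbT.
    by rewrite /X' !in_setD xB xD xX.
  apply: (leq_trans (subset_leq_card sub)).
  apply: (leq_trans (cU _ _)); rewrite leq_add2r; exact: cU.
have cardBad : (#|Bad| <= (2 * m - 1) * #|PD|)%N.
  rewrite leqNgt; apply/negP => H.
  pose f x := odflt x [pick y in D | partner e m t x y].
  have fP x : x \in Bad -> f x \in D /\ partner e m t x (f x).
    rewrite inE => /andP [_ /exists_inP [y yD pxy]]; rewrite /f.
    case: pickP => [y' /andP [] //|/(_ y)]; by rewrite yD pxy.
  have fC : {in Bad, forall x, f x \in PD}.
    move=> x /fP [fD pf]; rewrite /PD in_setI fD andbT /X in_setU.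
    by rewrite (partner_D2 m0 pf) orbT.
  have [y yP Sy] := pigeon (t := (2 * m - 1)%N) fC H.
  have := partners_small y irr noK m0.
  suff : [set c in Bad | f c == y] \subset [set x | partner e m t y x].
    by move=> /subset_leq_card; lia.
  apply/subsetP => x; rewrite inE => /andP [xB /eqP fy]; rewrite inE.
  by have [_] := fP x xB; rewrite fy partner_sym.
set F := [set p : T * T | [&& e p.1 p.2, p.1 \in X' & p.2 \in X']].
have subF : is_subgraph e X' F by apply/forall_inP => p; rewrite inE.
have aLe : (alpha_sub X' F < #|D|)%N.
  have : (alpha_sub X' F <= #|D|.-1)%N; last by lia.
  apply/bigmax_leqP => I /andP [IX' indI].
  have inX' x : x \in I -> [/\ x \in X, x \notin D & x \notin Bad].
    move=> /(subsetP IX'); by rewrite /X' !in_setD => /and3P [-> -> ->].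
  have : (#|I| < #|D|)%N; last by lia.
  apply: (indep_small (t := t) sg noK m0 dom D0 Hnab).
  - rewrite disjoint_subset; apply/subsetP => x /inX' [_ xD _]; by rewrite inE.
  - move=> x y xI yI; apply/negP => exy.
    move: indI => /forall_inP /(_ x xI) /forall_inP /(_ y yI); rewrite inE /=.
    by rewrite exy (subsetP IX' x xI) (subsetP IX' y yI).
  - move=> x /inX' [xX xD xB]; move: (xX); rewrite /X in_setU => /orP [->|]; first by left.
    move=> /(@D2P T e m t x m0) [z pz]; right; exists z => //.
    apply: contra xB => zD; rewrite inE; apply/andP; split.
      by rewrite in_setD xD xX.
    by apply/exists_inP; exists z.
have rho0 : 0 < hall_ratio e.
  have sub1 : is_subgraph e [set x0] set0 by apply/forall_inP => p; rewrite in_set0.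
  have a1 := alpha_pos irr sub1 (set11 x0).
  have ne : [set x0] != set0 by apply/set0Pn; exists x0; rewrite set11.
  apply: (lt_le_trans _ (hall_ge sub1 ne)).
  by rewrite cards1 divr_gt0 // ltr0n.
have bX' : (#|X'|%:R : rat) <= hall_ratio e * (#|D|%:R - 1).
  have [->|[x xX']] := set_0Vmem X'.
    rewrite cards0 mulr_ge0 ?(ltW rho0) // subr_ge0 ler1n //.
  have a0 := alpha_pos irr subF xX'.
  have X'0 : X' != set0 by apply/set0Pn; exists x.
  have := hall_ge subF X'0; rewrite ler_pdivrMr ?ltr0n // => h.
  apply: (le_trans h); rewrite ler_wpM2l ?(ltW rho0) //.
  by rewrite lerBrDr natr1 ler_nat.
have cX : (#|X| <= #|X'| + 2 * m * #|PD|)%N.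
  have e1 : ((2 * m - 1) * #|PD| + #|PD| = 2 * m * #|PD|)%N.
    by rewrite -{2}(mul1n #|PD|) -mulnDl subnK //; lia.
  lia.
have h1 : (#|X|%:R : rat) <= #|X'|%:R + (2 * m)%:R * #|PD|%:R.
  by rewrite -natrM -natrD ler_nat.
have h2 : (#|X'|%:R : rat) < hall_ratio e * #|D|%:R.
  apply: (le_lt_trans bX'); rewrite mulrBr mulr1 ltrBlDr ltrDl //.
have -> : ((Posz m)%:~R : rat) = m%:R by [].
move: h1; rewrite -/X -/PD Heta natrM => h1.
apply: (le_lt_trans h1); rewrite -!mulrA ltr_leD //.
Qed.
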